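(* Let $K$ be a division ring and $M,N\ge2$ integers. Let $G$ be a group and let $c,d\in K[G]$ have ranks $M$ and $N$ respectively, both contain the identity of $G$ in their supports, and satisfy $cd=1$. Write $c=r_0c_0+\dots+r_{M-1}c_{M-1}$ and $d=s_0d_0+\dots+s_{N-1}d_{N-1}$ with pairwise distinct $c_i\in G$, pairwise distinct $d_j\in G$, nonzero $r_i,s_j\in K$, and $c_0=d_0=1$. Let $\sigma$ be the partition of $\{0,\dots,M-1\}\times\{0,\dots,N-1\}$ with $(i,j)\sim_\sigma(i',j')$ iff $c_id_j=c_{i'}d_{j'}$. (a) Suppose that for every $m$ with $2\le m<M$, every group $G'$ and all $x,y\in K[G']$ of ranks $m$ and $N$, $xy=1$ implies $yx=1$. Then $\sigma$ is row connected; moreover every partition $\pi\le\sigma$ that is realizable with $r_0,\dots,r_{M-1},s_0,\dots,s_{N-1}$ is row connected. (b) Suppose that for every $n$ with $2\le n<N$, every group $G'$ and all $x,y\in K[G']$ of ranks $M$ and $n$, $xy=1$ implies $yx=1$. Then $\sigma$ is column connected; moreover every partition $\pi\le\sigma$ that is realizable with $r_0,\dots,r_{M-1},s_0,\dots,s_{N-1}$ is column connected.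
   Context: $K[G]$ is the group ring; the rank of an element is the number of group elements with nonzero coefficient (its support). For a partition $\pi$ of $\{0,\dots,M-1\}\times\{0,\dots,N-1\}$, $(i,j)\sim_\pi(i',j')$ means the pairs lie in the same block. $\pi\le\sigma$ means every block of $\pi$ is contained in a block of $\sigma$. $\pi$ is realizable with nonzero $r_0,\dots,r_{M-1},s_0,\dots,s_{N-1}\in K$ if for each block $E$, $\sum_{(i,j)\in E}r_is_j$ equals $1$ if $(0,0)\in E$ and $0$ otherwise. Let $\sim_r$ be the equivalence relation on $\{0,\dots,M-1\}$ generated by $i\sim_r i'$ whenever there exist $j,j'$ with $(i,j)\sim_\pi(i',j')$; $\pi$ is row connected if $\sim_r$ has a single class. Similarly $\sim_c$ on $\{0,\dots,N-1\}$ is generated by $j\sim_c j'$ whenever there exist $i,i'$ with $(i,j)\sim_\pi(i',j')$; $\pi$ is column connected if $\sim_c$ has a single class. *)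

(* Defs.v *)
(* group rings K[G] over an arbitrary (possibly infinite)
   group G, modelled with finmap's finitely supported functions. *)
From HB Require Import structures.
From mathcomp Require Import all_boot all_order all_algebra.
From mathcomp Require Import finmap.
Set Implicit Arguments. Unset Strict Implicit. Unset Printing Implicit Defensive.
Import GRing.Theory.
Local Open Scope ring_scope.
Local Open Scope fset_scope.

Notation grpring K G := {fsfun G -> K with 0%R}.

Section GroupRing.
Variables (K : nzRingType) (G : groupType).

Definition rank (x : grpring K G) : nat := #|` finsupp x|.

Definition gr_one : grpring K G := [fsfun z in [fset (1%g : G)] => (1 : K)].

Definition gr_mul (x y : grpring K G) : grpring K G :=
  [fsfun z in [fset (a * b)%g | a in finsupp x, b in finsupp y] =>
     \sum_(a <- finsupp x) \sum_(b <- finsupp y | (a * b)%g == z) x a * y b].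

End GroupRing.

Section Partitions.
Variables (M N : nat).
Local Notation T := ('I_M * 'I_N)%type.

Definition sigma_part (G : groupType) (ci : 'I_M -> G) (dj : 'I_N -> G)
  : {set {set T}} :=
  equivalence_partition
    (fun p q : T => (ci p.1 * dj p.2)%g == (ci q.1 * dj q.2)%g) [set: T].

Definition same_block (P : {set {set T}}) (x y : T) : bool :=
  [exists B in P, (x \in B) && (y \in B)].

Definition part_le (P Q : {set {set T}}) : Prop :=
  forall B, B \in P -> exists2 C, C \in Q & B \subset C.

Definition idx00 (p : T) : bool := ((p.1 : nat) == 0%N) && ((p.2 : nat) == 0%N).

Definition realizable (K : nzRingType) (P : {set {set T}})
  (r : 'I_M -> K) (s : 'I_N -> K) : Prop :=
  forall E, E \in P ->
    \sum_(p in E) r p.1 * s p.2 = if [exists p in E, idx00 p] then 1 else 0.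

(* generating relations of ~_r and ~_c (both symmetric, so the reflexive
   transitive closure [connect] is the equivalence relation they generate) *)
Definition row_rel (P : {set {set T}}) : rel 'I_M :=
  fun i i' => [exists j, exists j', same_block P (i, j) (i', j')].
Definition col_rel (P : {set {set T}}) : rel 'I_N :=
  fun j j' => [exists i, exists i', same_block P (i, j) (i', j')].

Definition row_connected (P : {set {set T}}) : Prop :=
  forall i i' : 'I_M, connect (row_rel P) i i'.
Definition col_connected (P : {set {set T}}) : Prop :=
  forall j j' : 'I_N, connect (col_rel P) j j'.

End Partitions.

(* Main.v *)
Require Import Defs.
From HB Require Import structures.
From mathcomp Require Import all_boot all_order all_algebra.
From mathcomp Require Import finmap.
Import GRing.Theory.
Local Open Scope ring_scope.
Local Open Scope fset_scope.


Section GR.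
Variables (K : nzRingType) (G : groupType).
Implicit Types x y w : grpring K G.

Lemma gr_mulE x y z : gr_mul x y z =
  \sum_(a <- finsupp x) \sum_(b <- finsupp y) (if (a * b == z)%g then x a * y b else 0).
Proof.
rewrite /gr_mul fsfun_fun.
under [RHS]eq_bigr do rewrite -big_mkcond /=.
case: ifP => // zn; symmetry; apply: big1_seq => a /= aX.
apply: big1_seq => b /andP[/eqP abz bY]; exfalso.
move: zn; rewrite -abz; move/negbT/negP; apply.
by apply/imfset2P; exists a => //; exists b.
Qed.

Lemma sum_incl {x} {A : {fset G}} {F : G -> K} : finsupp x `<=` A ->
  (forall a, a \notin finsupp x -> F a = 0) ->
  \sum_(a <- finsupp x) F a = \sum_(a <- A) F a.
Proof. by move=> sub H; apply: big_fset_incl => // a _; apply: H. Qed.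

Lemma gr_mulE2 {x y} {A B : {fset G}} {z} : finsupp x `<=` A -> finsupp y `<=` B ->
  gr_mul x y z =
  \sum_(a <- A) \sum_(b <- B) (if (a * b == z)%g then x a * y b else 0).
Proof.
move=> sA sB; rewrite gr_mulE (sum_incl sA); last first.
  move=> a aX; apply: big1 => b _; rewrite fsfun_dflt // mul0r; by case: ifP.
apply: eq_bigr => a _; rewrite (sum_incl sB) // => b bY.
by rewrite (fsfun_dflt bY) mulr0; case: ifP.
Qed.

Lemma sum_collapse (A : {fset G}) u (F : G -> K) :
  \sum_(e <- A) (if u == e then F e else 0) = if u \in A then F u else 0.
Proof.
case: (boolP (u \in A)) => uA.
  rewrite (big_fsetD1 u uA) /= eqxx big1_fset ?addr0 // => e.
  by rewrite in_fsetD1 => /andP[neu _] _; rewrite eq_sym (negbTE neu).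
apply: big1_fset => e eA _; case: eqP => // ue; by move: uA; rewrite ue eA.
Qed.

Lemma supp_mul x y :
  finsupp (gr_mul x y) `<=` [fset (a * b)%g | a in finsupp x, b in finsupp y].
Proof.
apply/fsubsetP => g; rewrite mem_finsupp /gr_mul fsfun_fun.
by case: ifP => //; rewrite eqxx.
Qed.

Lemma gr_mulA x y w : gr_mul x (gr_mul y w) = gr_mul (gr_mul x y) w.
Proof.
apply/fsfunP => z.
set A := finsupp x; set B := finsupp y; set C := finsupp w.
set AB := [fset (a * b)%g | a in A, b in B].
set BC := [fset (a * b)%g | a in B, b in C].
have -> : gr_mul x (gr_mul y w) z = \sum_(a <- A) \sum_(b <- B) \sum_(f <- C)
   (if (a * (b * f) == z)%g then x a * (y b * w f) else 0).
  rewrite (gr_mulE2 (fsubset_refl A) (supp_mul y w)).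
  apply: eq_big_seq => a aA.
  transitivity (\sum_(e <- BC) \sum_(b <- B) \sum_(f <- C)
     (if (b * f == e)%g then (if (a * e == z)%g then x a * (y b * w f) else 0) else 0)).
    apply: eq_bigr => e _; rewrite (gr_mulE2 (fsubset_refl B) (fsubset_refl C)).
    case: ifP => _.
      rewrite mulr_sumr; apply: eq_bigr => b _; rewrite mulr_sumr.
      by apply: eq_bigr => f _; case: ifP; rewrite ?mulr0.
    by symmetry; apply: big1 => b _; apply: big1 => f _; case: ifP.
  rewrite exchange_big; apply: eq_big_seq => b bB.
  rewrite exchange_big; apply: eq_big_seq => f fC.
  rewrite (sum_collapse BC (b * f)%g (fun e => if (a * e == z)%g then x a * (y b * w f) else 0)).
  by have -> : (b * f)%g \in BC by apply/imfset2P; exists b => //; exists f.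
symmetry; rewrite (gr_mulE2 (supp_mul x y) (fsubset_refl C)).
transitivity (\sum_(f <- C) \sum_(e <- AB) \sum_(a <- A) \sum_(b <- B)
   (if (a * b == e)%g then (if (e * f == z)%g then x a * y b * w f else 0) else 0)).
  rewrite exchange_big; apply: eq_bigr => f _; apply: eq_bigr => e _.
  rewrite (gr_mulE2 (fsubset_refl A) (fsubset_refl B)).
  case: ifP => _.
    rewrite mulr_suml; apply: eq_bigr => a _; rewrite mulr_suml.
    by apply: eq_bigr => b _; case: ifP; rewrite ?mul0r.
  by symmetry; apply: big1 => a _; apply: big1 => b _; case: ifP.
transitivity (\sum_(f <- C) \sum_(a <- A) \sum_(b <- B)
   (if (a * b * f == z)%g then x a * y b * w f else 0)).
  apply: eq_bigr => f _; rewrite exchange_big; apply: eq_big_seq => a aA.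
  rewrite exchange_big; apply: eq_big_seq => b bB.
  rewrite (sum_collapse AB (a * b)%g (fun e => if (e * f == z)%g then x a * y b * w f else 0)).
  by have -> : (a * b)%g \in AB by apply/imfset2P; exists a => //; exists b.
rewrite exchange_big; apply: eq_bigr => a _; rewrite exchange_big.
apply: eq_bigr => b _; apply: eq_bigr => f _.
by rewrite mulgA mulrA.
Qed.

Lemma gr_one_supp : finsupp (gr_one K G) `<=` [fset 1%g].
Proof.
apply/fsubsetP => g; rewrite mem_finsupp /gr_one fsfun_fun.
by case: ifP => //; rewrite eqxx.
Qed.

Lemma gr_oneE : gr_one K G 1%g = 1.
Proof. by rewrite /gr_one fsfun_fun inE eqxx. Qed.

Lemma gr_mul1 x : gr_mul x (gr_one K G) = x.
Proof.
apply/fsfunP => z; rewrite (gr_mulE2 (fsubset_refl _) gr_one_supp).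
under eq_bigr do rewrite big_seq_fset1 gr_oneE mulg1 mulr1 eq_sym.
rewrite sum_collapse; case: ifP => // /negbT zX.
by rewrite fsfun_dflt.
Qed.

Lemma gr_1mul x : gr_mul (gr_one K G) x = x.
Proof.
apply/fsfunP => z; rewrite (gr_mulE2 gr_one_supp (fsubset_refl _)).
rewrite big_seq_fset1.
under eq_bigr do rewrite gr_oneE mul1g mul1r eq_sym.
rewrite sum_collapse; case: ifP => // /negbT zX.
by rewrite fsfun_dflt.
Qed.

End GR.
Section Comb.
Variables (K : nzRingType) (M N : nat) (G : groupType).
Variables (ci : 'I_M -> G) (dj : 'I_N -> G) (r : 'I_M -> K) (s : 'I_N -> K).
Local Notation T := ('I_M * 'I_N)%type.

Lemma eqR_sigma : {in [set: T] & &, equivalence_rel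
   (fun p q : T => (ci p.1 * dj p.2)%g == (ci q.1 * dj q.2)%g)}.
Proof. by move=> x y z _ _ _ /=; split=> // /eqP ->. Qed.

Lemma sigma_partition : partition (sigma_part ci dj) [set: T].
Proof. exact: (equivalence_partitionP eqR_sigma). Qed.

Lemma sigma_same B p q : B \in sigma_part ci dj -> p \in B -> q \in B ->
  (ci p.1 * dj p.2)%g = (ci q.1 * dj q.2)%g.
Proof.
move=> BS pB qB; have [_ tiP _] := and3P sigma_partition.
rewrite -(def_pblock tiP BS pB) in qB.
by move: qB; rewrite (pblock_equivalence_partition eqR_sigma) ?in_setT // => /eqP.
Qed.

Lemma le_same P B p q : part_le P (sigma_part ci dj) -> B \in P -> p \in B -> q \in B ->
  (ci p.1 * dj p.2)%g = (ci q.1 * dj q.2)%g.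
Proof.
move=> le BP pB qB; have [C CS BC] := le B BP.
exact: (@sigma_same C p q CS (subsetP BC _ pB) (subsetP BC _ qB)).
Qed.

Lemma sigma_mem E p q : E \in sigma_part ci dj -> p \in E ->
  (q \in E) = ((ci p.1 * dj p.2)%g == (ci q.1 * dj q.2)%g).
Proof.
move=> ES pE; have [_ tiP _] := and3P sigma_partition.
by rewrite -(def_pblock tiP ES pE) (pblock_equivalence_partition eqR_sigma) ?in_setT.
Qed.

Lemma ex00_lemma (p00 : T) (B : {set T}) : (forall p, idx00 p = (p == p00)) ->
  [exists p in B, idx00 p] = (p00 \in B).
Proof.
move=> h00; apply/existsP/idP => [[p /andP[pB]]|pB]; first by rewrite h00 => /eqP <-.
by exists p00; rewrite pB h00 eqxx.
Qed.

Lemma block_sum P (p00 : T) (S : {set T}) :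
  partition P [set: T] -> realizable P r s ->
  (forall p, idx00 p = (p == p00)) ->
  (forall B, B \in P -> forall p q, p \in B -> q \in B -> p \in S -> q \in S) ->
  \sum_(p in S) r p.1 * s p.2 = if p00 \in S then 1 else 0.
Proof.
move=> partP real h00 closed.
have [covP tiP _] := and3P partP.
have ex00 (B : {set T}) : [exists p in B, idx00 p] = (p00 \in B).
  apply/existsP/idP => [[p /andP[pB]]|pB]; first by rewrite h00 => /eqP <-.
  by exists p00; rewrite pB h00 eqxx.
transitivity (\sum_(p in cover P) (if p \in S then r p.1 * s p.2 else 0)).
  by rewrite (eqP covP) big_mkcond /=; apply: eq_bigl => p; rewrite in_setT.
rewrite big_trivIset //.
have p00c : p00 \in cover P by rewrite (eqP covP) in_setT.
set B0 := pblock P p00.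
have B0P : B0 \in P by apply: pblock_mem.
have p0B0 : p00 \in B0 by rewrite mem_pblock.
have rest : \sum_(B in P | B != B0) \sum_(x in B)
    (if x \in S then r x.1 * s x.2 else 0) = 0.
  apply: big1 => B /andP[BP nB].
  case: (boolP [exists p in B, p \in S]) => [/existsP[p /andP[pB pS]]|nS].
    transitivity (\sum_(q in B) r q.1 * s q.2).
      by apply: eq_bigr => q qB; rewrite (closed B BP p q).
    rewrite real // ex00; case: ifP => // p0B.
    by move: nB; rewrite /B0 (def_pblock tiP BP p0B) eqxx.
  apply: big1 => q qB; case: ifP => // qS.
  by move: nS; move/existsP; case; exists q; rewrite qB qS.
rewrite (bigD1 B0) //= rest addr0.
case: (boolP (p00 \in S)) => p0S.
  transitivity (\sum_(q in B0) r q.1 * s q.2).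
    by apply: eq_bigr => q qB; rewrite (closed B0 B0P p00 q).
  by rewrite real // ex00 p0B0.
apply: big1 => q qB; case: ifP => // qS.
by move: p0S; rewrite (closed B0 B0P q p00 qB p0B0 qS).
Qed.

End Comb.
Arguments sigma_mem {M N G ci dj E p q}.
Arguments block_sum {K M N r s P p00 S}.
Arguments le_same {M N G ci dj P B p q}.
Arguments ex00_lemma {M N p00 B}.
Arguments sigma_partition {M N G ci dj}.
Lemma fs_coef {K : nzRingType} {G : groupType} {I : finType}
  {ci : I -> G} {r : I -> K} {P : pred I} {x : grpring K G} : injective ci ->
  (forall g, x g = \sum_(i | P i && (ci i == g)) r i) ->
  forall i, x (ci i) = if P i then r i else 0.
Proof.
move=> inj Hx i; rewrite Hx; case: (boolP (P i)) => Pi.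
  rewrite (big_pred1 i) // => i'; rewrite /= (inj_eq inj).
  by case: eqP => [->|]; rewrite ?Pi ?andbF.
rewrite big_pred0 // => i'; rewrite (inj_eq inj).
by case: eqP => [->|]; rewrite ?andbF // (negbTE Pi).
Qed.

Section Coef.
Variables (K : nzRingType) (G : groupType) (I J : finType).
Variables (ci : I -> G) (dj : J -> G) (r : I -> K) (s : J -> K) (P : pred I) (Q : pred J).



Lemma mul_coef (x y : grpring K G) : injective ci -> injective dj ->
  (forall i, r i != 0) -> (forall j, s j != 0) ->
  (forall g, x g = \sum_(i | P i && (ci i == g)) r i) ->
  (forall g, y g = \sum_(j | Q j && (dj j == g)) s j) ->
  forall g, gr_mul x y g =
    \sum_(i | P i) \sum_(j | Q j) (if (ci i * dj j == g)%g then r i * s j else 0).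
Proof.
move=> injc injd rn sn Hx Hy g.
have inA i : P i -> ci i \in finsupp x.
  by move=> Pi; rewrite mem_finsupp (fs_coef injc Hx) Pi rn.
have inB j : Q j -> dj j \in finsupp y.
  by move=> Qj; rewrite mem_finsupp (fs_coef injd Hy) Qj sn.
rewrite gr_mulE.
transitivity (\sum_(a <- finsupp x) \sum_(b <- finsupp y) \sum_(i | P i)
  \sum_(j | Q j) (if dj j == b then (if ci i == a then
      (if (a * b == g)%g then r i * s j else 0) else 0) else 0)).
  apply: eq_bigr => a _; apply: eq_bigr => b _.
  rewrite Hx Hy !big_mkcondr /=; case: ifP => abg; last first.
    by symmetry; apply: big1 => i _; apply: big1 => j _; case: (dj j == b); case: (ci i == a).
  rewrite mulr_suml; apply: eq_bigr => i _; rewrite mulr_sumr.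
  by apply: eq_bigr => j _; case: (ci i == a); case: (dj j == b); rewrite ?mul0r ?mulr0.
rewrite exchange_big /=.
under eq_bigr => b _ do rewrite exchange_big /=.
rewrite exchange_big /=.
apply: eq_bigr => i Pi.
under eq_bigr => b _ do rewrite exchange_big /=.
rewrite exchange_big /=.
apply: eq_bigr => j Qj; rewrite exchange_big /=.
transitivity (\sum_(a <- finsupp x)
   (if ci i == a then (if (a * dj j == g)%g then r i * s j else 0) else 0)).
  by apply: eq_bigr => a _; rewrite sum_collapse (inB j Qj).
by rewrite sum_collapse (inA i Pi).
Qed.

End Coef.
Arguments mul_coef {K G I J ci dj r s P Q x y}.
Lemma sigma_real (K : nzRingType) (M N : nat) (G : groupType)
    (c d : grpring K G)
    (ci : 'I_M -> G) (r : 'I_M -> K) (dj : 'I_N -> G) (s : 'I_N -> K)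
    (i0 : 'I_M) (j0 : 'I_N) :
  (forall p, idx00 p = (p == (i0, j0))) -> ci i0 = 1%g -> dj j0 = 1%g ->
  gr_mul c d = gr_one K G ->
  injective ci -> injective dj ->
  (forall i, r i != 0) -> (forall j, s j != 0) ->
  (forall g : G, c g = \sum_(i < M | ci i == g) r i) ->
  (forall g : G, d g = \sum_(j < N | dj j == g) s j) ->
  realizable (sigma_part ci dj) r s.
Proof.
move=> h00 ci0 dj0 cd injc injd rn sn Hc Hd E ES.
have Hc' g : c g = \sum_(i | predT i && (ci i == g)) r i by rewrite Hc.
have Hd' g : d g = \sum_(j | predT j && (dj j == g)) s j by rewrite Hd.
have [covS tiS nS0] := and3P (@sigma_partition M N G ci dj).
have /set0Pn[p pE] : E != set0 by apply: contraNneq nS0 => E0; rewrite -E0.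
set g := (ci p.1 * dj p.2)%g.
have smem q : (q \in E) = (g == (ci q.1 * dj q.2)%g) := @sigma_mem M N G ci dj E p q ES pE.
transitivity (\sum_(q | (ci q.1 * dj q.2)%g == g) r q.1 * s q.2).
  by apply: eq_bigl => q; rewrite smem eq_sym.
have := congr1 (fun f : grpring K G => f g) cd.
rewrite /= (mul_coef injc injd rn sn Hc' Hd') pair_big_dep /= -big_mkcond => ->.
rewrite (@ex00_lemma M N (i0, j0) E h00) smem /= ci0 dj0 mulg1 /gr_one fsfun_fun.
by rewrite inE eq_sym.
Qed.
Lemma same_block_sym M N (P : {set {set 'I_M * 'I_N}}) x y :
  same_block P x y = same_block P y x.
Proof.
by apply/existsP/existsP => -[B /andP[BP /andP[h1 h2]]]; exists B; rewrite BP h1 h2.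
Qed.

Lemma partA (K : unitRingType) (M N : nat) (G : groupType)
    (c d : grpring K G)
    (ci : 'I_M -> G) (r : 'I_M -> K) (dj : 'I_N -> G) (s : 'I_N -> K) :
  (forall x : K, x != 0 -> x \is a GRing.unit) ->
  (2 <= M)%N -> (2 <= N)%N ->
  rank c = M -> rank d = N ->
  gr_mul c d = gr_one K G ->
  injective ci -> injective dj ->
  (forall i, r i != 0) -> (forall j, s j != 0) ->
  (forall g : G, c g = \sum_(i < M | ci i == g) r i) ->
  (forall g : G, d g = \sum_(j < N | dj j == g) s j) ->
  (forall i : 'I_M, nat_of_ord i = 0%N -> ci i = 1%g) ->
  (forall j : 'I_N, nat_of_ord j = 0%N -> dj j = 1%g) ->
  (forall m : nat, (2 <= m < M)%N ->
      forall (G' : groupType) (x y : grpring K G'),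
        rank x = m -> rank y = N -> gr_mul x y = gr_one K G' ->
        gr_mul y x = gr_one K G') ->
  forall P : {set {set 'I_M * 'I_N}},
       partition P [set: 'I_M * 'I_N] -> part_le P (sigma_part ci dj) ->
       realizable P r s -> row_connected P.
Proof.
move=> Ku M2 N2 rc rd cd injc injd rn sn Hc Hd c0 d0 hyp P partP leP realP.
have M0 : (0 < M)%N by apply: ltnW.
have N0 : (0 < N)%N by apply: ltnW.
pose i0 : 'I_M := Ordinal M0. pose j0 : 'I_N := Ordinal N0.
pose j1 : 'I_N := Ordinal N2.
have ci0 : ci i0 = 1%g by apply: c0.
have dj0 : dj j0 = 1%g by apply: d0.
have dj1 : dj j1 != 1%g by rewrite -dj0 (inj_eq injd).
have h00 p : idx00 p = (p == (i0, j0)) by case: p.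
have Hc' g : c g = \sum_(i | predT i && (ci i == g)) r i by rewrite Hc.
have Hd' g : d g = \sum_(j | predT j && (dj j == g)) s j by rewrite Hd.
have symR : symmetric (row_rel P).
  have h i i' : row_rel P i i' -> row_rel P i' i.
    move=> /existsP[j /existsP[j' H]]; apply/existsP; exists j'.
    by apply/existsP; exists j; rewrite same_block_sym.
  by move=> i i'; apply/idP/idP; apply: h.
move=> ia ib; apply/idPn => nc.
have [i1 ni1] : exists i1, ~~ connect (row_rel P) i0 i1.
  case: (boolP (connect (row_rel P) i0 ia)) => h; last by exists ia.
  exists ib; apply: contra nc => h'; apply: (connect_trans _ h').
  by rewrite (sym_connect_sym symR).
pose I0 := [set i | connect (row_rel P) i0 i].
have i0I : i0 \in I0 by rewrite inE connect0.
have i1I : i1 \notin I0 by rewrite inE.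
have KS g : \sum_(p in [set p : 'I_M * 'I_N | (p.1 \in I0) && ((ci p.1 * dj p.2)%g == g)])
    r p.1 * s p.2 = if g == 1%g then 1 else 0.
  rewrite (block_sum partP realP h00).
    by rewrite inE /= i0I ci0 dj0 mulg1 eq_sym.
  move=> B BP p q pB qB; rewrite !inE => /andP[pI /eqP pg].
  rewrite -pg (le_same leP BP qB pB) eqxx andbT.
  apply: (connect_trans pI); apply: connect1; apply/existsP; exists p.2.
  apply/existsP; exists q.2; apply/existsP; exists B; rewrite BP.
  by case: p pB {pI pg} => ? ?; case: q qB => ? ? /= -> ->.
case: (boolP [exists i2 in I0, i2 != i0]) => [/existsP[i2 /andP[i2I i2n]] | none].
  pose c' : grpring K G := [fsfun g in [fset ci i | i in enum I0] =>
      \sum_(i | (i \in I0) && (ci i == g)) r i].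
  have c'E g : c' g = \sum_(i | (i \in I0) && (ci i == g)) r i.
    rewrite /c' fsfun_fun; case: ifP => // /negbT gn; symmetry.
    apply: big1 => k /andP[iI /eqP ig]; exfalso; move/negP: gn; apply.
    by rewrite -ig; apply/imfsetP; exists k; rewrite //= mem_enum.
  have c'd : gr_mul c' d = gr_one K G.
    apply/fsfunP => g; rewrite (mul_coef injc injd rn sn c'E Hd') pair_big_dep /=.
    transitivity (\sum_(p in [set p : 'I_M * 'I_N | (p.1 \in I0) && ((ci p.1 * dj p.2)%g == g)])
      r p.1 * s p.2).
      rewrite big_mkcond [RHS]big_mkcond; apply: eq_bigr => p _; rewrite inE.
      by case: (p.1 \in I0); case: (_ == g).
    by rewrite KS /gr_one fsfun_fun inE.
  have sub1 : finsupp c' `<=` finsupp c.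
    apply/fsubsetP => g; rewrite mem_finsupp => gS.
    case: (boolP [exists i, ci i == g]) => [/existsP[i /eqP ig]|none'].
      by rewrite mem_finsupp -ig (fs_coef injc Hc') rn.
    exfalso; move: gS; rewrite c'E big1 ?eqxx // => i /andP[_ ig].
    by move: none'; rewrite negb_exists => /forallP /(_ i); rewrite ig.
  have ci1c : ci i1 \in finsupp c by rewrite mem_finsupp (fs_coef injc Hc') rn.
  have ci1c' : ci i1 \notin finsupp c'.
    by rewrite mem_finsupp (fs_coef injc c'E) (negbTE i1I) eqxx.
  have mlt : (rank c' < M)%N.
    rewrite -rc; apply: fproper_ltn_card; rewrite fproperE sub1 /=.
    by apply/fsubsetPn; exists (ci i1).
  have mge : (2 <= rank c')%N.
    have : [fset ci i0; ci i2] `<=` finsupp c'.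
      apply/fsubsetP => g; rewrite !inE => /orP[]/eqP ->;
        by rewrite mem_finsupp (fs_coef injc c'E) ?i0I ?i2I rn.
    by move/fsubset_leq_card; rewrite cardfs2 (inj_eq injc) eq_sym i2n.
  have mb : (2 <= rank c' < M)%N by rewrite mge mlt.
  have dc' := hyp (rank c') mb G c' d erefl rd c'd.
  have ecc : c = c'.
    transitivity (gr_mul c (gr_one K G)); first by rewrite gr_mul1.
    by rewrite -dc' gr_mulA cd gr_1mul.
  by move: ci1c ci1c'; rewrite ecc => ->.
have := KS (dj j1); rewrite (negbTE dj1) (big_pred1 (i0, j1)) /=; last first.
  move=> [i j]; rewrite inE /=; case: (boolP (i \in I0)) => iI /=.
    have ei : i = i0.
      apply/eqP; apply/negPn/negP => ne; move/negP: none; apply.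
      by apply/existsP; exists i; rewrite iI ne.
    by rewrite ei ci0 mul1g (inj_eq injd) xpair_eqE eqxx.
  rewrite xpair_eqE; case: eqP => // ei; by move: iI; rewrite ei i0I.
move=> H.
have : r i0 * s j1 = r i0 * 0 by rewrite mulr0.
by move/(mulrI (Ku _ (rn i0)))/eqP; rewrite (negbTE (sn j1)).
Qed.
Lemma partB (K : unitRingType) (M N : nat) (G : groupType)
    (c d : grpring K G)
    (ci : 'I_M -> G) (r : 'I_M -> K) (dj : 'I_N -> G) (s : 'I_N -> K) :
  (forall x : K, x != 0 -> x \is a GRing.unit) ->
  (2 <= M)%N -> (2 <= N)%N ->
  rank c = M -> rank d = N ->
  gr_mul c d = gr_one K G ->
  injective ci -> injective dj ->
  (forall i, r i != 0) -> (forall j, s j != 0) ->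
  (forall g : G, c g = \sum_(i < M | ci i == g) r i) ->
  (forall g : G, d g = \sum_(j < N | dj j == g) s j) ->
  (forall i : 'I_M, nat_of_ord i = 0%N -> ci i = 1%g) ->
  (forall j : 'I_N, nat_of_ord j = 0%N -> dj j = 1%g) ->
  (forall n : nat, (2 <= n < N)%N ->
      forall (G' : groupType) (x y : grpring K G'),
        rank x = M -> rank y = n -> gr_mul x y = gr_one K G' ->
        gr_mul y x = gr_one K G') ->
  forall P : {set {set 'I_M * 'I_N}},
       partition P [set: 'I_M * 'I_N] -> part_le P (sigma_part ci dj) ->
       realizable P r s -> col_connected P.
Proof.
move=> Ku M2 N2 rc rd cd injc injd rn sn Hc Hd c0 d0 hyp P partP leP realP.
have M0 : (0 < M)%N by apply: ltnW.
have N0 : (0 < N)%N by apply: ltnW.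
pose i0 : 'I_M := Ordinal M0. pose j0 : 'I_N := Ordinal N0.
pose i1 : 'I_M := Ordinal M2.
have ci0 : ci i0 = 1%g by apply: c0.
have dj0 : dj j0 = 1%g by apply: d0.
have ci1 : ci i1 != 1%g by rewrite -ci0 (inj_eq injc).
have h00 p : idx00 p = (p == (i0, j0)) by case: p.
have Hc' g : c g = \sum_(i | predT i && (ci i == g)) r i by rewrite Hc.
have Hd' g : d g = \sum_(j | predT j && (dj j == g)) s j by rewrite Hd.
have symR : symmetric (col_rel P).
  have h j j' : col_rel P j j' -> col_rel P j' j.
    move=> /existsP[i /existsP[i' H]]; apply/existsP; exists i'.
    by apply/existsP; exists i; rewrite same_block_sym.
  by move=> j j'; apply/idP/idP; apply: h.
move=> ja jb; apply/idPn => nc.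
have [j1 nj1] : exists j1, ~~ connect (col_rel P) j0 j1.
  case: (boolP (connect (col_rel P) j0 ja)) => h; last by exists ja.
  exists jb; apply: contra nc => h'; apply: (connect_trans _ h').
  by rewrite (sym_connect_sym symR).
pose J0 := [set j | connect (col_rel P) j0 j].
have j0J : j0 \in J0 by rewrite inE connect0.
have j1J : j1 \notin J0 by rewrite inE.
have KS g : \sum_(p in [set p : 'I_M * 'I_N | (p.2 \in J0) && ((ci p.1 * dj p.2)%g == g)])
    r p.1 * s p.2 = if g == 1%g then 1 else 0.
  rewrite (block_sum partP realP h00).
    by rewrite inE /= j0J ci0 dj0 mulg1 eq_sym.
  move=> B BP p q pB qB; rewrite !inE => /andP[pJ /eqP pg].
  rewrite -pg (le_same leP BP qB pB) eqxx andbT.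
  apply: (connect_trans pJ); apply: connect1; apply/existsP; exists p.1.
  apply/existsP; exists q.1; apply/existsP; exists B; rewrite BP.
  by case: p pB {pJ pg} => ? ?; case: q qB => ? ? /= -> ->.
case: (boolP [exists j2 in J0, j2 != j0]) => [/existsP[j2 /andP[j2J j2n]] | none].
  pose d' : grpring K G := [fsfun g in [fset dj j | j in enum J0] =>
      \sum_(j | (j \in J0) && (dj j == g)) s j].
  have d'E g : d' g = \sum_(j | (j \in J0) && (dj j == g)) s j.
    rewrite /d' fsfun_fun; case: ifP => // /negbT gn; symmetry.
    apply: big1 => k /andP[jJ /eqP jg]; exfalso; move/negP: gn; apply.
    by rewrite -jg; apply/imfsetP; exists k; rewrite //= mem_enum.
  have cd' : gr_mul c d' = gr_one K G.
    apply/fsfunP => g; rewrite (mul_coef injc injd rn sn Hc' d'E) pair_big_dep /=.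
    transitivity (\sum_(p in [set p : 'I_M * 'I_N | (p.2 \in J0) && ((ci p.1 * dj p.2)%g == g)])
      r p.1 * s p.2).
      rewrite big_mkcond [RHS]big_mkcond; apply: eq_bigr => p _; rewrite inE.
      by case: (p.2 \in J0); case: (_ == g).
    by rewrite KS /gr_one fsfun_fun inE.
  have sub1 : finsupp d' `<=` finsupp d.
    apply/fsubsetP => g; rewrite mem_finsupp => gS.
    case: (boolP [exists j, dj j == g]) => [/existsP[j /eqP jg]|none'].
      by rewrite mem_finsupp -jg (fs_coef injd Hd') sn.
    exfalso; move: gS; rewrite d'E big1 ?eqxx // => j /andP[_ jg].
    by move: none'; rewrite negb_exists => /forallP /(_ j); rewrite jg.
  have dj1d : dj j1 \in finsupp d by rewrite mem_finsupp (fs_coef injd Hd') sn.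
  have dj1d' : dj j1 \notin finsupp d'.
    by rewrite mem_finsupp (fs_coef injd d'E) (negbTE j1J) eqxx.
  have nlt : (rank d' < N)%N.
    rewrite -rd; apply: fproper_ltn_card; rewrite fproperE sub1 /=.
    by apply/fsubsetPn; exists (dj j1).
  have nge : (2 <= rank d')%N.
    have : [fset dj j0; dj j2] `<=` finsupp d'.
      apply/fsubsetP => g; rewrite !inE => /orP[]/eqP ->;
        by rewrite mem_finsupp (fs_coef injd d'E) ?j0J ?j2J sn.
    by move/fsubset_leq_card; rewrite cardfs2 (inj_eq injd) eq_sym j2n.
  have nb : (2 <= rank d' < N)%N by rewrite nge nlt.
  have d'c := hyp (rank d') nb G c d' rc erefl cd'.
  have edd : d = d'.
    transitivity (gr_mul (gr_one K G) d); first by rewrite gr_1mul.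
    by rewrite -d'c -gr_mulA cd gr_mul1.
  by move: dj1d dj1d'; rewrite edd => ->.
have := KS (ci i1); rewrite (negbTE ci1) (big_pred1 (i1, j0)) /=; last first.
  move=> [i j]; rewrite inE /=; case: (boolP (j \in J0)) => jJ /=.
    have ej : j = j0.
      apply/eqP; apply/negPn/negP => ne; move/negP: none; apply.
      by apply/existsP; exists j; rewrite jJ ne.
    by rewrite ej dj0 mulg1 (inj_eq injc) xpair_eqE eqxx andbT.
  rewrite xpair_eqE andbC; case: eqP => // ej; by move: jJ; rewrite ej j0J.
move=> H.
have : r i1 * s j0 = 0 * s j0 by rewrite mul0r.
by move/(mulIr (Ku _ (sn j0)))/eqP; rewrite (negbTE (rn i1)).
Qed.

Theorem lemma4p17 (K : unitRingType) (M N : nat) (G : groupType)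
    (c d : grpring K G)
    (ci : 'I_M -> G) (r : 'I_M -> K) (dj : 'I_N -> G) (s : 'I_N -> K) :
  (* K is a division ring *)
  (forall x : K, x != 0 -> x \is a GRing.unit) ->
  (2 <= M)%N -> (2 <= N)%N ->
  rank c = M -> rank d = N ->
  (1%g \in finsupp c) -> (1%g \in finsupp d) ->
  gr_mul c d = gr_one K G ->
  (* c = r_0 c_0 + ... + r_{M-1} c_{M-1}, d = s_0 d_0 + ... + s_{N-1} d_{N-1} *)
  injective ci -> injective dj ->
  (forall i, r i != 0) -> (forall j, s j != 0) ->
  (forall g : G, c g = \sum_(i < M | ci i == g) r i) ->
  (forall g : G, d g = \sum_(j < N | dj j == g) s j) ->
  (forall i : 'I_M, nat_of_ord i = 0%N -> ci i = 1%g) ->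
  (forall j : 'I_N, nat_of_ord j = 0%N -> dj j = 1%g) ->
  ((forall m : nat, (2 <= m < M)%N ->
      forall (G' : groupType) (x y : grpring K G'),
        rank x = m -> rank y = N -> gr_mul x y = gr_one K G' ->
        gr_mul y x = gr_one K G') ->
    row_connected (sigma_part ci dj) /\
    (forall P : {set {set 'I_M * 'I_N}},
       partition P [set: 'I_M * 'I_N] -> part_le P (sigma_part ci dj) ->
       realizable P r s -> row_connected P))
  /\
  ((forall n : nat, (2 <= n < N)%N ->
      forall (G' : groupType) (x y : grpring K G'),
        rank x = M -> rank y = n -> gr_mul x y = gr_one K G' ->
        gr_mul y x = gr_one K G') ->
    col_connected (sigma_part ci dj) /\
    (forall P : {set {set 'I_M * 'I_N}},
       partition P [set: 'I_M * 'I_N] -> part_le P (sigma_part ci dj) ->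
       realizable P r s -> col_connected P)).
Proof.
move=> Ku M2 N2 rc rd _ _ cd injc injd rn sn Hc Hd c0 d0.
have M0 : (0 < M)%N by apply: ltnW.
have N0 : (0 < N)%N by apply: ltnW.
pose i0 : 'I_M := Ordinal M0. pose j0 : 'I_N := Ordinal N0.
have ci0 : ci i0 = 1%g by apply: c0.
have dj0 : dj j0 = 1%g by apply: d0.
have h00 p : idx00 p = (p == (i0, j0)) by case: p.
have real : realizable (sigma_part ci dj) r s
  := @sigma_real K M N G c d ci r dj s i0 j0 h00 ci0 dj0 cd injc injd rn sn Hc Hd.
have lerefl : part_le (sigma_part ci dj) (sigma_part ci dj).
  by move=> B BS; exists B.
split=> hyp.
  have := @partA K M N G c d ci r dj s Ku M2 N2 rc rd cd injc injd rn sn Hc Hd c0 d0 hyp.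
  move=> H; split; last exact: H.
  exact: (H _ sigma_partition lerefl real).
have := @partB K M N G c d ci r dj s Ku M2 N2 rc rd cd injc injd rn sn Hc Hd c0 d0 hyp.
move=> H; split; last exact: H.
exact: (H _ sigma_partition lerefl real).
Qed.
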